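(* Let $T>0$, $\sigma>0$, $\lambda>0$, $\kappa>0$, let the cost function be $g(z)=\kappa z$, and let $H^1\in\mathcal{C}^2_b(\mathbb{R})$, $H^1\ne0$. For each $N\ge1$ consider the $N$-player risk-neutral game with claims $H^1$ for player 1 and $H^i=0$ for $i=2,\dots,N$, and let $(v^{1,N},\dots,v^{N,N})$ be the classical solution of $$0=v^j_t+\tfrac12\sigma^2v^j_{pp}+\lambda\dot X^*\,v^j_p-\kappa\,\dot X^j\,\dot X^*,\qquad v^j(T,p)=H^j(p),\quad j=1,\dots,N,$$ with equilibrium trading speeds $\dot X^j=\frac{\lambda}{\kappa}\Big(v^j_p-\frac{1}{N+1}\sum_{i=1}^Nv^i_p\Big)$ and aggregate speed $\sum_{i=1}^N\dot X^i=\frac{\lambda}{\kappa(N+1)}\sum_{i=1}^Nv^i_p$. Then the aggregate equilibrium trading speed satisfies $\lim_{N\to\infty}\sum_{i=1}^N\dot X^i_t=0$.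
   Context: Setting: players $j=1,\dots,N$ hold cash-settled claims $H^j(P_T)$ on a stock with price $dP_t=\sigma dB_t+\lambda\sum_i\dot X^i_t dt$, where $X^i$ is player $i$'s (absolutely continuous) holding with $X^i_0=0$, and player $j$ maximizes $\mathbb{E}[-\int_0^T\dot X^j_t\,g(\sum_i\dot X^i_t)dt+H^j(P_T)]$. The functions $v^j$ are the players' value functions and the formulas give the Nash equilibrium feedback trading speeds (functions of time and spot price). $\mathcal{C}^2_b$ denotes functions bounded together with derivatives up to order 2. *)

(* Defs.v *)
From Stdlib Require Import Reals Arith.
From Coquelicot Require Import Coquelicot.
Open Scope R_scope.

Definition C2b (H : R -> R) : Prop :=
  exists H' H'' : R -> R,
    (forall p, is_derive H p (H' p)) /\
    (forall p, is_derive H' p (H'' p)) /\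
    (forall p, continuous H'' p) /\
    (exists M, forall p, Rabs (H p) <= M /\ Rabs (H' p) <= M /\ Rabs (H'' p) <= M).

Definition cont_within (D : R * R -> Prop) (f : R -> R -> R) (t p : R) : Prop :=
  filterlim (fun z : R * R => f (fst z) (snd z)) (within D (locally (t, p)))
            (locally (f t p)).

(* Players are indexed 1..N; sum over players. *)
Definition psum (N : nat) (f : nat -> R) : R := sum_n_m f 1 N.

(* Equilibrium trading speed of player j (vp i t p = v^i_p(t,p)). *)
Definition speed (lam kappa : R) (N : nat) (vp : nat -> R -> R -> R)
  (j : nat) (t p : R) : R :=
  lam / kappa * (vp j t p - / INR (N + 1) * psum N (fun i => vp i t p)).

Definition agg_speed (lam kappa : R) (N : nat) (vp : nat -> R -> R -> R)
  (t p : R) : R :=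
  psum N (fun i => speed lam kappa N vp i t p).

Definition claims (H1 : R -> R) (j : nat) : R -> R :=
  if Nat.eqb j 1 then H1 else fun _ => 0.

Definition classical_solution (T sigma lam kappa : R) (N : nat)
  (H : nat -> R -> R) (v vt vp vpp : nat -> R -> R -> R) : Prop :=
  forall j, (1 <= j <= N)%nat ->
    (forall t p, 0 < t < T -> is_derive (fun s => v j s p) t (vt j t p)) /\
    (forall t p, 0 <= t < T ->
       is_derive (fun q => v j t q) p (vp j t p) /\
       is_derive (fun q => vp j t q) p (vpp j t p)) /\
    (forall t p, 0 <= t <= T ->
       cont_within (fun z => 0 <= fst z <= T) (v j) t p) /\
    (forall t p, 0 <= t < T ->
       cont_within (fun z => 0 <= fst z < T) (vp j) t p /\
       cont_within (fun z => 0 <= fst z < T) (vpp j) t p) /\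
    (forall t p, 0 < t < T ->
       cont_within (fun _ => True) (vt j) t p) /\
    (forall t p, 0 < t < T ->
       0 = vt j t p + / 2 * sigma ^ 2 * vpp j t p
           + lam * agg_speed lam kappa N vp t p * vp j t p
           - kappa * speed lam kappa N vp j t p * agg_speed lam kappa N vp t p) /\
    (forall p, v j T p = H j p) /\
    (exists M, forall t p, 0 <= t <= T ->
       Rabs (v j t p) <= M /\ (t < T -> Rabs (vp j t p) <= M)).

(* Main.v *)
Require Import Defs.
From Stdlib Require Import Reals Arith.
From Coquelicot Require Import Coquelicot.
From Stdlib Require Import Lra Psatz ClassicalEpsilon Classical.
Open Scope R_scope.

Lemma deriv_right_max (f : R -> R) x l eta :
  is_derive f x l -> 0 < eta ->
  (forall s, x <= s <= x + eta -> f s <= f x) -> l <= 0.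
Proof.
  intros Hd He Hm. apply is_derive_Reals in Hd.
  destruct (Rle_or_lt l 0) as [H|H]; auto. exfalso.
  destruct (Hd l H) as [d Hdl].
  set (h := Rmin d eta / 2).
  assert (0 < Rmin d eta) by (apply Rmin_glb_lt; [exact (cond_pos d)|lra]).
  assert (Hh : 0 < h) by (unfold h; lra).
  assert (Hh1: h < d) by (unfold h; pose proof (Rmin_l d eta); pose proof (cond_pos d); lra).
  assert (Hh2: h <= eta) by (unfold h; pose proof (Rmin_r d eta); lra).
  specialize (Hdl h ltac:(lra) ltac:(rewrite Rabs_right; lra)).
  specialize (Hm (x + h) ltac:(lra)).
  assert ((f (x+h) - f x)/h <= 0).
  { unfold Rdiv. apply Rmult_le_0_r; [lra|]. left; apply Rinv_0_lt_compat; lra. }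
  apply Rabs_def2 in Hdl. lra.
Qed.

Lemma deriv_left_max (f : R -> R) x l eta :
  is_derive f x l -> 0 < eta ->
  (forall s, x - eta <= s <= x -> f s <= f x) -> 0 <= l.
Proof.
  intros Hd He Hm.
  assert (Hd' : is_derive (fun s => f (- s)) (- x) (- l)).
  { replace (- l) with (-1 * l) by ring.
    apply (is_derive_comp f (fun s => - s)).
    rewrite Ropp_involutive; exact Hd.
    auto_derive; [exact I| ring]. }
  assert (- l <= 0).
  { apply (deriv_right_max _ _ _ eta Hd' He).
    intros s Hs. rewrite Ropp_involutive. apply Hm. lra. }
  lra.
Qed.

Lemma deriv_max0 (f : R -> R) x l :
  is_derive f x l -> (forall s, f s <= f x) -> l = 0.
Proof.
  intros Hd Hm.
  pose proof (deriv_right_max f x l 1 Hd Rlt_0_1 (fun s _ => Hm s)).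
  pose proof (deriv_left_max f x l 1 Hd Rlt_0_1 (fun s _ => Hm s)). lra.
Qed.

Lemma deriv2_max (f f' : R -> R) x l :
  (forall y, is_derive f y (f' y)) -> is_derive f' x l ->
  (forall s, f s <= f x) -> l <= 0.
Proof.
  intros Hd Hd2 Hm.
  assert (H0 : f' x = 0) by (apply (deriv_max0 f x); auto).
  destruct (Rle_or_lt l 0) as [H|H]; auto. exfalso.
  apply is_derive_Reals in Hd2.
  destruct (Hd2 l H) as [d Hdl].
  set (h := d / 2).
  assert (Hh : 0 < h) by (unfold h; pose proof (cond_pos d); lra).
  assert (Hpos : forall c, x < c < x + h -> 0 < f' c).
  { intros c Hc. specialize (Hdl (c - x) ltac:(apply Rgt_not_eq; lra) ltac:(rewrite Rabs_right; unfold h in *; lra)).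
    replace (x + (c - x)) with c in Hdl by ring. rewrite H0 in Hdl.
    apply Rabs_def2 in Hdl.
    assert (0 < (f' c - 0) / (c - x)) by lra.
    unfold Rdiv in H1. rewrite Rminus_0_r in H1.
    destruct (Rle_or_lt (f' c) 0) as [Hc'|Hc']; auto.
    assert (f' c * / (c - x) <= 0).
    { apply Rmult_le_0_r; auto. left; apply Rinv_0_lt_compat; lra. }
    lra. }
  destruct (MVT_cor2 f f' x (x + h) ltac:(lra)) as [c [Hc1 Hc2]].
  { intros c _. apply is_derive_Reals. apply Hd. }
  specialize (Hpos c Hc2). specialize (Hm (x + h)).
  assert (0 < f' c * (x + h - x)) by (apply Rmult_lt_0_compat; lra). lra.
Qed.

Lemma deriv_lip (f : R -> R) x l L :
  is_derive f x l -> (forall h, Rabs (f (x + h) - f x) <= L * Rabs h) -> Rabs l <= L.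
Proof.
  intros Hd Hl. apply is_derive_Reals in Hd.
  destruct (Rle_or_lt (Rabs l) L) as [H|H]; auto. exfalso.
  destruct (Hd (Rabs l - L) ltac:(lra)) as [d Hdl].
  set (h := d / 2).
  assert (Hh : 0 < h) by (unfold h; pose proof (cond_pos d); lra).
  assert (Hn : h <> 0) by (apply Rgt_not_eq; lra).
  assert (Hb : Rabs h < d) by (rewrite Rabs_right; unfold h in *; lra).
  specialize (Hdl h Hn Hb).
  specialize (Hl h). rewrite (Rabs_right h) in Hl by lra.
  assert (Rabs ((f (x + h) - f x) / h) <= L).
  { unfold Rdiv. rewrite Rabs_mult, Rabs_inv, (Rabs_right h) by lra.
    apply (Rmult_le_reg_r h); [lra|]. rewrite Rmult_assoc, Rinv_l by lra. lra. }
  pose proof (Rabs_triang_inv l ((f (x + h) - f x) / h)).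
  rewrite <- Rabs_Ropp in Hdl. replace (- ((f (x + h) - f x) / h - l)) with (l - (f (x + h) - f x) / h) in Hdl by ring.
  lra.
Qed.

Lemma cw_eps D f t p : cont_within D f t p ->
  forall eps, 0 < eps -> exists del, 0 < del /\ forall u v, D (u, v) ->
    Rabs (u - t) < del -> Rabs (v - p) < del -> Rabs (f u v - f t p) < eps.
Proof.
  intros H eps He.
  specialize (H (fun y => ball (f t p) eps y) (locally_ball (f t p) (mkposreal eps He))).
  unfold filtermap, within in H. destruct H as [del Hd].
  exists del. split; [apply cond_pos|].
  intros u v HD Hu Hv. specialize (Hd (u, v)).
  simpl in Hd. apply Hd; auto. split; simpl; auto.
Qed.

Definition clamp (a b u : R) : R := Rmax a (Rmin b u).

Lemma clamp_in a b u : a <= b -> a <= clamp a b u <= b.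
Proof. intros; unfold clamp, Rmax, Rmin; repeat destruct Rle_dec; lra. Qed.

Lemma clamp_id a b u : a <= u <= b -> clamp a b u = u.
Proof. intros; unfold clamp, Rmax, Rmin; repeat destruct Rle_dec; lra. Qed.

Lemma clamp_lip a b u v : a <= b -> Rabs (clamp a b u - clamp a b v) <= Rabs (u - v).
Proof. intros; unfold clamp, Rmax, Rmin; repeat destruct Rle_dec; split_Rabs; lra. Qed.

Lemma clamp_cont2d (f : R -> R -> R) T a b :
  0 <= a -> a <= b -> b <= T ->
  (forall t p, 0 <= t <= T -> cont_within (fun z => 0 <= fst z <= T) f t p) ->
  forall u v, continuity_2d_pt (fun u v => f (clamp a b u) v) u v.
Proof.
  intros Ha Hab Hb Hc u v eps.
  pose proof (clamp_in a b u Hab) as Hu.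
  destruct (cw_eps _ _ _ _ (Hc (clamp a b u) v ltac:(lra)) eps (cond_pos eps)) as [del [Hd Hdel]].
  exists (mkposreal del Hd). simpl. intros u' v' H1 H2.
  apply Hdel; simpl; auto.
  pose proof (clamp_in a b u' Hab); lra.
  pose proof (clamp_lip a b u' u Hab); lra.
Qed.

Lemma cont2d_pt_1d (F : R -> R -> R) u v :
  continuity_2d_pt F u v -> continuity_pt (F u) v.
Proof.
  intros H. unfold continuity_pt, continue_in, limit1_in, limit_in. simpl. unfold R_dist.
  intros eps He. destruct (H (mkposreal eps He)) as [del Hd].
  exists del. split; [apply cond_pos|]. intros x [_ Hx].
  apply Hd; auto. rewrite Rminus_eq_0, Rabs_R0. apply cond_pos.
Qed.

Lemma joint_max (F : R -> R -> R) a b c d :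
  a <= b -> c <= d -> (forall u v, continuity_2d_pt F u v) ->
  exists x y, a <= x <= b /\ c <= y <= d /\
    forall u v, a <= u <= b -> c <= v <= d -> F u v <= F x y.
Proof.
  intros Hab Hcd Hc.
  assert (Hpm : forall u, exists y, c <= y <= d /\ forall v, c <= v <= d -> F u v <= F u y).
  { intros u. destruct (continuity_ab_maj (F u) c d Hcd) as [y [H1 H2]].
    intros; apply cont2d_pt_1d; auto.
    exists y; split; auto. }
  pose (pm := fun u => proj1_sig (constructive_indefinite_description _ (Hpm u))).
  assert (Hpm' : forall u, c <= pm u <= d /\ forall v, c <= v <= d -> F u v <= F u (pm u)).
  { intros u. unfold pm. destruct (constructive_indefinite_description _ (Hpm u)); simpl; auto. }
  pose (m := fun u => F (clamp a b u) (pm (clamp a b u))).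
  assert (Hmc : forall u, continuity_pt m u).
  { intros u. unfold continuity_pt, continue_in, limit1_in, limit_in. simpl. unfold R_dist.
    intros eps He.
    destruct (uniform_continuity_2d F a b c d (fun x y _ _ => Hc x y) (mkposreal eps He)) as [del Hd].
    exists del. split; [apply cond_pos|]. intros u' [_ Hu'].
    unfold m. set (U := clamp a b u). set (U' := clamp a b u').
    assert (HU : a <= U <= b) by (apply clamp_in; auto).
    assert (HU' : a <= U' <= b) by (apply clamp_in; auto).
    assert (HUU : Rabs (U' - U) < del) by (pose proof (clamp_lip a b u' u Hab); unfold U, U'; lra).
    destruct (Hpm' U) as [HpU HmU]. destruct (Hpm' U') as [HpU' HmU'].
    assert (E1 : Rabs (F U' (pm U) - F U (pm U)) < eps).
    { apply (Hd U (pm U) U' (pm U)); auto. rewrite Rminus_eq_0, Rabs_R0; apply cond_pos. }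
    assert (E2 : Rabs (F U (pm U') - F U' (pm U')) < eps).
    { apply (Hd U' (pm U') U (pm U')); auto. rewrite <- Rabs_Ropp.
      replace (- (U - U')) with (U' - U) by ring. auto.
      rewrite Rminus_eq_0, Rabs_R0; apply cond_pos. }
    pose proof (HmU' (pm U) HpU). pose proof (HmU (pm U') HpU').
    apply Rabs_def2 in E1. apply Rabs_def2 in E2. apply Rabs_def1; lra. }
  destruct (continuity_ab_maj m a b Hab (fun c _ => Hmc c)) as [x [Hx1 Hx2]].
  exists x, (pm x). destruct (Hpm' x) as [Hp1 _]. split; auto. split; auto.
  intros u v Hu Hv. specialize (Hx1 u Hu). unfold m in Hx1.
  rewrite !clamp_id in Hx1 by auto.
  destruct (Hpm' u) as [_ Hq]. specialize (Hq v Hv). lra.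
Qed.

Lemma is_derive_sub (f g : R->R) x df dg : is_derive f x df -> is_derive g x dg -> is_derive (fun y => f y - g y) x (df - dg).
Proof. intros H1 H2. exact (@is_derive_minus R_AbsRing R_NormedModule f g x df dg H1 H2). Qed.
Lemma is_derive_add (f g : R->R) x df dg : is_derive f x df -> is_derive g x dg -> is_derive (fun y => f y + g y) x (df + dg).
Proof. intros H1 H2. exact (@is_derive_plus R_AbsRing R_NormedModule f g x df dg H1 H2). Qed.

Lemma is_derive_cst (c x : R) : is_derive (fun _ : R => c) x 0.
Proof. exact (@is_derive_const R_AbsRing R_NormedModule c x). Qed.

Lemma derive_eq (f : R -> R) (x l l' : R) : is_derive f x l -> l = l' -> is_derive f x l'.
Proof. intros H E; subst; auto. Qed.

Lemma Rabs_def2b (x y : R) : Rabs x <= y -> - y <= x <= y.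
Proof. split_Rabs; lra. Qed.

Lemma MP (T t1 a B M del : R) (d dt dp dpp b dc : R -> R -> R) :
  0 < a -> 0 <= B -> t1 <= T ->
  (forall u v, continuity_2d_pt dc u v) ->
  (forall u v, t1 <= u <= T -> dc u v = d u v) ->
  (forall t p, t1 <= t < T -> is_derive (fun s => d s p) t (dt t p)) ->
  (forall t p, t1 <= t < T -> is_derive (fun q => d t q) p (dp t p)) ->
  (forall t p, t1 <= t < T -> is_derive (fun q => dp t q) p (dpp t p)) ->
  (forall t p, t1 <= t <= T -> Rabs (d t p) <= M) ->
  (forall t p, t1 <= t < T -> Rabs (b t p) <= B) ->
  (forall t p, t1 <= t < T -> dt t p + a * dpp t p + b t p * dp t p = 0) ->
  (forall p, d T p <= del) ->
  forall t p, t1 <= t <= T -> d t p <= del.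
Proof.
  intros Ha HB HT Hdc Hdce Hdt Hdp Hdpp HM Hb Hpde Hter t0 p0 Ht0.
  destruct (Rle_or_lt (d t0 p0) del) as [|Hgt]; auto. exfalso.
  assert (Ht0T : t0 < T).
  { destruct (Rle_lt_or_eq_dec t0 T) as [|E]; [lra|auto|]. subst t0. specialize (Hter p0). lra. }
  assert (HM0 : 0 <= M) by (pose proof (HM t0 p0 Ht0); pose proof (Rabs_pos (d t0 p0)); lra).
  set (K := 2 * a + B + 1).
  set (g := fun u v => exp (K * (T - u)) * (1 + v * v)).
  assert (Hgpos : forall u v, 0 < g u v).
  { intros; unfold g; apply Rmult_lt_0_compat; [apply exp_pos|nra]. }
  assert (Hgge : forall u v, u <= T -> 1 + v * v <= g u v).
  { intros u v Hu; unfold g. pose proof (exp_ineq1_le (K * (T - u))).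
    assert (0 <= K * (T - u)) by (unfold K; apply Rmult_le_pos; lra).
    assert (0 <= 1 + v * v) by nra. nra. }
  set (eps := (d t0 p0 - del) / (2 * g t0 p0)).
  assert (Heps : 0 < eps).
  { unfold eps. apply Rdiv_lt_0_compat; [lra|]. specialize (Hgpos t0 p0). lra. }
  set (Rr := 1 + (M + Rabs del) / eps).
  assert (HRr : 1 <= Rr /\ eps * (Rr - 1) = M + Rabs del).
  { unfold Rr. split.
    - assert (0 <= (M + Rabs del) / eps) by (apply Rdiv_le_0_compat; [pose proof (Rabs_pos del)|]; lra). lra.
    - field. lra. }
  set (z := fun u v => d u v - del - eps * g u v).
  set (zc := fun u v => dc u v - del - eps * g u v).
  assert (Hzc : forall u v, continuity_2d_pt zc u v).
  { intros u v. unfold zc. apply continuity_2d_pt_minus.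
    apply continuity_2d_pt_minus; auto. apply continuity_2d_pt_const.
    apply continuity_2d_pt_mult. apply continuity_2d_pt_const.
    unfold g. apply continuity_2d_pt_mult.
    - apply (continuity_1d_2d_pt_comp exp (fun u v => K * (T - u))).
      apply derivable_continuous_pt, derivable_pt_exp.
      apply continuity_2d_pt_mult. apply continuity_2d_pt_const.
      apply continuity_2d_pt_minus. apply continuity_2d_pt_const. apply continuity_2d_pt_id1.
    - apply continuity_2d_pt_plus. apply continuity_2d_pt_const.
      apply continuity_2d_pt_mult; apply continuity_2d_pt_id2. }
  assert (Hout : forall u v, t1 <= u <= T -> Rr < Rabs v -> z u v < 0).
  { intros u v Hu Hv. unfold z. pose proof (HM u v Hu) as H1. apply Rabs_def2b in H1.
    pose proof (Hgge u v ltac:(lra)).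
    assert (Rr < Rabs v * Rabs v) by nra.
    rewrite <- Rabs_mult, Rabs_right in H0 by nra.
    pose proof (Rabs_pos del). pose proof (Rle_abs del).
    destruct HRr as [HR1 HR2].
    assert (Rr < g u v) by lra.
    assert (eps * Rr < eps * g u v) by (apply Rmult_lt_compat_l; lra).
    assert (eps * Rr = eps + (M + Rabs del)) by (rewrite <- HR2; ring).
    pose proof (Rabs_def2b del (Rabs del) (Rle_refl _)). lra. }
  assert (Hz0 : z t0 p0 = (d t0 p0 - del) / 2).
  { unfold z, eps. field. specialize (Hgpos t0 p0). lra. }
  assert (Hp0 : Rabs p0 <= Rr).
  { destruct (Rle_or_lt (Rabs p0) Rr) as [|H]; auto.
    pose proof (Hout t0 p0 ltac:(lra) H). lra. }
  destruct (joint_max zc t0 T (-Rr) Rr ltac:(lra) ltac:(lra) Hzc) as [ts [ps [Hts [Hps Hmax]]]].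
  assert (Hzz : forall u v, t0 <= u <= T -> zc u v = z u v).
  { intros u v Hu. unfold zc, z. rewrite Hdce; auto. lra. }
  assert (Hbig : z t0 p0 <= z ts ps).
  { rewrite <- !Hzz by lra. apply Hmax. lra. apply Rabs_le_between in Hp0 ; lra. }
  assert (HtsT : ts < T).
  { destruct (Rle_lt_or_eq_dec ts T) as [|E]; [lra|auto|]. subst ts.
    specialize (Hter ps). specialize (Hgpos T ps).
    assert (0 < eps * g T ps) by nra.
    assert (z T ps < 0) by (unfold z; lra). lra. }
  assert (Hmaxp : forall v, z ts v <= z ts ps).
  { intros v. destruct (Rle_or_lt (Rabs v) Rr) as [Hv|Hv].
    - rewrite <- !Hzz by lra. apply Hmax; auto. apply Rabs_le_between in Hv; lra.
    - pose proof (Hout ts v ltac:(lra) Hv). lra. }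
  assert (Hmaxt : forall s, ts <= s <= ts + (T - ts) -> z s ps <= z ts ps).
  { intros s Hs. rewrite <- !Hzz by lra. apply Hmax; lra. }
  set (E := exp (K * (T - ts))).
  assert (HE : 0 < E) by apply exp_pos.
  assert (Hts1 : t1 <= ts < T) by lra.
  assert (Dt : is_derive (fun s => z s ps) ts (dt ts ps - eps * (- K * E * (1 + ps * ps)))).
  { unfold z. apply is_derive_sub.
    replace (dt ts ps) with (dt ts ps - 0) by ring.
    apply is_derive_sub; [apply Hdt; auto| apply is_derive_cst].
    unfold g, E. eapply derive_eq. { auto_derive; try exact I; reflexivity. } unfold Rminus; ring. }
  assert (Dp : forall q, is_derive (fun v => z ts v) q (dp ts q - eps * (E * (2 * q)))).
  { intros q. unfold z. apply is_derive_sub.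
    replace (dp ts q) with (dp ts q - 0) by ring.
    apply is_derive_sub; [apply Hdp; auto| apply is_derive_cst].
    unfold g, E. eapply derive_eq. { auto_derive; try exact I; reflexivity. } unfold Rminus; ring. }
  assert (Dpp : is_derive (fun q => dp ts q - eps * (E * (2 * q))) ps (dpp ts ps - eps * (E * 2))).
  { apply is_derive_sub; [apply Hdpp; auto|]. eapply derive_eq. { auto_derive; try exact I; reflexivity. } unfold Rminus; ring. }
  pose proof (deriv_right_max _ _ _ (T - ts) Dt ltac:(lra) Hmaxt) as Zt.
  pose proof (deriv_max0 _ _ _ (Dp ps) Hmaxp) as Zp.
  pose proof (deriv2_max _ _ _ _ Dp Dpp Hmaxp) as Zpp.
  pose proof (Hpde ts ps Hts1) as P.
  pose proof (Hb ts ps Hts1) as Hbb. apply Rabs_def2b in Hbb.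
  set (bb := b ts ps) in *. set (x := ps) in *.
  set (Q := K * (1 + x * x) - 2 * a - 2 * bb * x).
  assert (HQ : 0 < Q).
  { unfold Q, K. assert (2 * bb * x <= B * (1 + x * x)).
    { destruct (Rle_or_lt 0 x).
      - assert (0 <= (B - bb) * x) by (apply Rmult_le_pos; lra).
        assert (0 <= B * ((x - 1) * (x - 1))) by (apply Rmult_le_pos; [lra| apply Rle_0_sqr]).
        replace (B * (1 + x * x)) with (B * ((x - 1) * (x - 1)) + 2 * ((B - bb) * x) + 2 * bb * x) by ring. lra.
      - assert (0 <= (B + bb) * (- x)) by (apply Rmult_le_pos; lra).
        assert (0 <= B * ((x + 1) * (x + 1))) by (apply Rmult_le_pos; [lra| apply Rle_0_sqr]).
        replace (B * (1 + x * x)) with (B * ((x + 1) * (x + 1)) + 2 * ((B + bb) * (- x)) + 2 * bb * x) by ring. lra. }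
    nra. }
  assert (Hw : 0 < eps * E * Q) by (apply Rmult_lt_0_compat; [apply Rmult_lt_0_compat|]; lra).
  assert (a * (dpp ts x - eps * (E * 2)) <= 0) by nra.
  assert (Iden : dt ts x + a * dpp ts x + bb * dp ts x =
    (dt ts x - eps * (- K * E * (1 + x * x))) + a * (dpp ts x - eps * (E * 2))
    + bb * (dp ts x - eps * (E * (2 * x))) - eps * E * Q) by (unfold Q; ring).
  rewrite Zp in Iden. lra.
Qed.

Lemma is_derive_neg (f : R -> R) x l : is_derive f x l -> is_derive (fun y => - f y) x (- l).
Proof. intros H. exact (@is_derive_opp R_AbsRing R_NormedModule f x l H). Qed.

Lemma MP_abs (T t1 a B M del : R) (d dt dp dpp b dc : R -> R -> R) :
  0 < a -> 0 <= B -> t1 <= T ->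
  (forall u v, continuity_2d_pt dc u v) ->
  (forall u v, t1 <= u <= T -> dc u v = d u v) ->
  (forall t p, t1 <= t < T -> is_derive (fun s => d s p) t (dt t p)) ->
  (forall t p, t1 <= t < T -> is_derive (fun q => d t q) p (dp t p)) ->
  (forall t p, t1 <= t < T -> is_derive (fun q => dp t q) p (dpp t p)) ->
  (forall t p, t1 <= t <= T -> Rabs (d t p) <= M) ->
  (forall t p, t1 <= t < T -> Rabs (b t p) <= B) ->
  (forall t p, t1 <= t < T -> dt t p + a * dpp t p + b t p * dp t p = 0) ->
  (forall p, Rabs (d T p) <= del) ->
  forall t p, t1 <= t <= T -> Rabs (d t p) <= del.
Proof.
  intros Ha HB HT Hdc Hdce Hdt Hdp Hdpp HM Hb Hpde Hter t p Ht.
  assert (H1 : d t p <= del).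
  { apply (MP T t1 a B M del d dt dp dpp b dc); auto.
    intros q; specialize (Hter q); apply Rabs_def2b in Hter; lra. }
  assert (H2 : - d t p <= del).
  { apply (MP T t1 a B M del (fun t p => - d t p) (fun t p => - dt t p) (fun t p => - dp t p)
      (fun t p => - dpp t p) b (fun t p => - dc t p)); auto.
    - intros; apply continuity_2d_pt_opp; auto.
    - intros; rewrite Hdce; auto.
    - intros; apply is_derive_neg; auto.
    - intros; apply is_derive_neg; auto.
    - intros; apply is_derive_neg; auto.
    - intros; rewrite Rabs_Ropp; auto.
    - intros t0 p0 H0; specialize (Hpde t0 p0 H0); lra.
    - intros q; specialize (Hter q); apply Rabs_def2b in Hter; lra. }
  apply Rabs_le; lra.
Qed.

Lemma psum_0 f : psum 0 f = 0.
Proof. unfold psum. rewrite sum_n_m_zero; auto. Qed.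

Lemma psum_S N f : psum (S N) f = psum N f + f (S N).
Proof. unfold psum. rewrite sum_n_Sm; [reflexivity| lia]. Qed.

Lemma psum_ext N f g : (forall i, (1 <= i <= N)%nat -> f i = g i) -> psum N f = psum N g.
Proof. intros H. unfold psum. apply sum_n_m_ext_loc. auto. Qed.

Lemma psum_lin4 N (f1 f2 f3 f4 : nat -> R) c2 c3 c4 c5 :
  psum N (fun j => f1 j + c2 * f2 j + c3 * f3 j - c4 * f4 j * c5) =
  psum N f1 + c2 * psum N f2 + c3 * psum N f3 - c4 * psum N f4 * c5.
Proof. induction N. rewrite !psum_0; ring. rewrite !psum_S, IHN; ring. Qed.

Lemma psum_zero N : psum N (fun _ => 0) = 0.
Proof. induction N. apply psum_0. rewrite psum_S, IHN; ring. Qed.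

Lemma psum_speed N (f : nat -> R) c e :
  psum N (fun i => c * (f i - e)) = c * (psum N f - INR N * e).
Proof. induction N. rewrite !psum_0; simpl; ring. rewrite !psum_S, IHN, S_INR; ring. Qed.

Lemma psum_bound N (f : nat -> R -> R -> R) (P : R -> Prop) :
  (forall i, (1 <= i <= N)%nat -> exists M, forall t q, P t -> Rabs (f i t q) <= M) ->
  exists M, forall t q, P t -> Rabs (psum N (fun i => f i t q)) <= M.
Proof.
  induction N; intros H.
  - exists 0. intros; rewrite psum_0, Rabs_R0; lra.
  - destruct IHN as [M1 HM1]. { intros i Hi; apply H; lia. }
    destruct (H (S N) ltac:(lia)) as [M2 HM2].
    exists (M1 + M2). intros t q Ht. rewrite psum_S.
    eapply Rle_trans; [apply Rabs_triang|]. specialize (HM1 t q Ht); specialize (HM2 t q Ht). lra.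
Qed.

Lemma psum_derive N (f : nat -> R -> R) (df : nat -> R) x :
  (forall i, (1 <= i <= N)%nat -> is_derive (f i) x (df i)) ->
  is_derive (fun s => psum N (fun i => f i s)) x (psum N df).
Proof.
  induction N; intros H.
  - rewrite psum_0. apply (is_derive_ext (fun _ => 0)). intros; rewrite psum_0; auto. apply is_derive_cst.
  - rewrite psum_S. apply (is_derive_ext (fun s => psum N (fun i => f i s) + f (S N) s)).
    intros; rewrite psum_S; auto.
    apply is_derive_add. apply IHN; intros; apply H; lia. apply H; lia.
Qed.

Lemma psum_cont2d N (f : nat -> R -> R -> R) u v :
  (forall i, (1 <= i <= N)%nat -> continuity_2d_pt (f i) u v) ->
  continuity_2d_pt (fun u v => psum N (fun i => f i u v)) u v.
Proof.
  induction N; intros H.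
  - apply (continuity_2d_pt_ext (fun _ _ => 0)). intros; rewrite psum_0; auto. apply continuity_2d_pt_const.
  - apply (continuity_2d_pt_ext (fun u v => psum N (fun i => f i u v) + f (S N) u v)).
    intros; rewrite psum_S; auto.
    apply continuity_2d_pt_plus. apply IHN; intros; apply H; lia. apply H; lia.
Qed.

Lemma psum_claims N (H1 : R -> R) q : (1 <= N)%nat -> psum N (fun i => claims H1 i q) = H1 q.
Proof.
  induction N; intros Hn. lia.
  rewrite psum_S. destruct N.
  - rewrite psum_0. unfold claims; simpl. ring.
  - rewrite IHN by lia. unfold claims. replace (Nat.eqb (S (S N)) 1) with false by reflexivity. ring.
Qed.

Lemma cont2d_shift (F : R -> R -> R) h u v :
  continuity_2d_pt F u (v + h) -> continuity_2d_pt (fun u v => F u (v + h)) u v.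
Proof.
  intros H eps. destruct (H eps) as [del Hd]. exists del. intros u' v' H1 H2.
  apply Hd; auto. replace (v' + h - (v + h)) with (v' - v) by ring. auto.
Qed.

Lemma is_derive_shift (f : R -> R) h x l : is_derive f (x + h) l -> is_derive (fun y => f (y + h)) x l.
Proof.
  intros H. assert (Hd : is_derive (fun y : R => y + h) x 1).
  { eapply derive_eq. auto_derive; try exact I; reflexivity. ring. }
  pose proof (is_derive_comp f (fun y => y + h) x l 1 H Hd) as E.
  eapply derive_eq. exact E. simpl. change (1 * l = l). ring.
Qed.

Lemma mvt_lip (f f' : R -> R) L :
  (forall x, is_derive f x (f' x)) -> (forall x, Rabs (f' x) <= L) ->
  forall x y, Rabs (f y - f x) <= L * Rabs (y - x).
Proof.
  intros Hd HL.
  assert (K : forall x y, x < y -> Rabs (f y - f x) <= L * Rabs (y - x)).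
  { intros x y Hxy. destruct (MVT_cor2 f f' x y Hxy) as [c [Hc1 Hc2]].
    intros; apply is_derive_Reals; auto.
    rewrite Hc1, Rabs_mult. apply Rmult_le_compat_r; [apply Rabs_pos|auto]. }
  intros x y. destruct (Rtotal_order x y) as [H|[H|H]].
  - auto.
  - subst. rewrite !Rminus_eq_0, Rabs_R0. pose proof (HL y). pose proof (Rabs_pos (f' y)). nra.
  - rewrite <- (Rabs_Ropp (f y - f x)), <- (Rabs_Ropp (y - x)).
    replace (- (f y - f x)) with (f x - f y) by ring. replace (- (y - x)) with (x - y) by ring. auto.
Qed.

Lemma Rabs_sub_le (a b : R) : Rabs (a - b) <= Rabs a + Rabs b.
Proof. split_Rabs; lra. Qed.

Lemma agg_formula lam kappa N vp t p : 0 < kappa ->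
  agg_speed lam kappa N vp t p = lam / kappa / INR (N + 1) * psum N (fun i => vp i t p).
Proof.
  intros Hk. unfold agg_speed, speed. rewrite psum_speed.
  rewrite plus_INR. replace (INR 1) with 1 by reflexivity. pose proof (pos_INR N). field. repeat split; apply Rgt_not_eq; lra.
Qed.

Lemma key (T sigma lam kappa : R) (H1 : R -> R) (L : R) (N : nat)
  (v vt vp vpp : nat -> R -> R -> R) :
  0 < T -> 0 < sigma -> 0 < lam -> 0 < kappa -> (1 <= N)%nat ->
  (forall x y, Rabs (H1 y - H1 x) <= L * Rabs (y - x)) ->
  classical_solution T sigma lam kappa N (claims H1) v vt vp vpp ->
  forall t p, 0 <= t < T -> Rabs (psum N (fun i => vp i t p)) <= L.
Proof.
  intros HT Hs Hl Hk HN HL Hsol.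
  set (W := fun t q => psum N (fun i => v i t q)).
  set (Wt := fun t q => psum N (fun i => vt i t q)).
  set (Wp := fun t q => psum N (fun i => vp i t q)).
  set (Wpp := fun t q => psum N (fun i => vpp i t q)).
  set (al := lam / kappa / INR (N + 1)).
  set (c := lam * al - kappa * (al * al)).
  assert (HWt : forall t q, 0 < t < T -> is_derive (fun s => W s q) t (Wt t q)).
  { intros t q Ht. apply psum_derive. intros i Hi. apply (proj1 (Hsol i Hi)); auto. }
  assert (HWp : forall t q, 0 <= t < T -> is_derive (fun r => W t r) q (Wp t q)).
  { intros t q Ht. apply psum_derive. intros i Hi. apply (proj1 (proj1 (proj2 (Hsol i Hi)) t q Ht)). }
  assert (HWpp : forall t q, 0 <= t < T -> is_derive (fun r => Wp t r) q (Wpp t q)).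
  { intros t q Ht. apply psum_derive. intros i Hi. apply (proj2 (proj1 (proj2 (Hsol i Hi)) t q Ht)). }
  assert (HWter : forall q, W T q = H1 q).
  { intros q. unfold W. rewrite <- (psum_claims N H1 q HN). apply psum_ext.
    intros i Hi. apply (Hsol i Hi). }
  destruct (psum_bound N v (fun t => 0 <= t <= T)) as [MW HMW].
  { intros i Hi. destruct (proj2 (proj2 (proj2 (proj2 (proj2 (proj2 (proj2 (Hsol i Hi)))))))) as [M HM].
    exists M. intros t q Ht. apply (HM t q Ht). }
  destruct (psum_bound N vp (fun t => 0 <= t < T)) as [MWp HMWp].
  { intros i Hi. destruct (proj2 (proj2 (proj2 (proj2 (proj2 (proj2 (proj2 (Hsol i Hi)))))))) as [M HM].
    exists M. intros t q Ht. apply (HM t q ltac:(lra)). lra. }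
  assert (HPDE : forall t q, 0 < t < T -> Wt t q + / 2 * sigma ^ 2 * Wpp t q + c * (Wp t q * Wp t q) = 0).
  { intros t q Ht.
    assert (E : psum N (fun j => vt j t q + / 2 * sigma ^ 2 * vpp j t q
        + lam * agg_speed lam kappa N vp t q * vp j t q
        - kappa * speed lam kappa N vp j t q * agg_speed lam kappa N vp t q) = 0).
    { rewrite <- (psum_zero N). apply psum_ext. intros j Hj.
      symmetry. apply (proj1 (proj2 (proj2 (proj2 (proj2 (proj2 (Hsol j Hj)))))) t q Ht). }
    rewrite psum_lin4 in E. fold (agg_speed lam kappa N vp t q) in E.
    rewrite agg_formula in E by auto. fold al in E.
    unfold Wt, Wpp, Wp, c. rewrite <- E. ring. }
  set (Wc := fun u q => psum N (fun i => v i (clamp 0 T u) q)).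
  assert (HWc : forall u q, continuity_2d_pt Wc u q).
  { intros u q. apply psum_cont2d. intros i Hi.
    apply (clamp_cont2d (v i) T 0 T); try lra.
    intros; apply (proj1 (proj2 (proj2 (Hsol i Hi)))); auto. }
  assert (HWcW : forall u q, 0 <= u <= T -> Wc u q = W u q).
  { intros u q Hu. unfold Wc, W. rewrite clamp_id; auto. }
  assert (HMW0 : 0 <= MW) by (pose proof (HMW 0 0 ltac:(lra)); pose proof (Rabs_pos (W 0 0)); unfold W in *; lra).
  assert (HMWp0 : 0 <= MWp) by (pose proof (HMWp 0 0 ltac:(lra)); pose proof (Rabs_pos (Wp 0 0)); unfold Wp in *; lra).
  assert (Lip1 : forall t1 q h, 0 < t1 <= T -> Rabs (W t1 (q + h) - W t1 q) <= L * Rabs h).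
  { intros t1 q h Ht1.
    apply (MP_abs T t1 (/ 2 * sigma ^ 2) (Rabs c * (2 * MWp)) (2 * MW) (L * Rabs h)
      (fun t q => W t (q + h) - W t q) (fun t q => Wt t (q + h) - Wt t q)
      (fun t q => Wp t (q + h) - Wp t q) (fun t q => Wpp t (q + h) - Wpp t q)
      (fun t q => c * (Wp t (q + h) + Wp t q)) (fun u q => Wc u (q + h) - Wc u q)); try lra.
    - apply Rmult_lt_0_compat; [lra| apply pow_lt; lra].
    - apply Rmult_le_pos; [apply Rabs_pos| lra].
    - intros u r. apply continuity_2d_pt_minus; auto. apply cont2d_shift; auto.
    - intros u r Hu. rewrite !HWcW by lra. reflexivity.
    - intros t r Ht. apply is_derive_sub; apply HWt; lra.
    - intros t r Ht. apply is_derive_sub; [apply is_derive_shift|]; apply HWp; lra.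
    - intros t r Ht. apply is_derive_sub; [apply is_derive_shift|]; apply HWpp; lra.
    - intros t r Ht. eapply Rle_trans; [apply Rabs_sub_le|].
      pose proof (HMW t (r + h) ltac:(lra)). pose proof (HMW t r ltac:(lra)). unfold W in *; lra.
    - intros t r Ht. rewrite Rabs_mult. apply Rmult_le_compat_l; [apply Rabs_pos|].
      eapply Rle_trans; [apply Rabs_triang|].
      pose proof (HMWp t (r + h) ltac:(lra)). pose proof (HMWp t r ltac:(lra)). unfold Wp in *; lra.
    - intros t r Ht. pose proof (HPDE t (r + h) ltac:(lra)). pose proof (HPDE t r ltac:(lra)).
      transitivity ((Wt t (r + h) + / 2 * sigma ^ 2 * Wpp t (r + h) + c * (Wp t (r + h) * Wp t (r + h)))
        - (Wt t r + / 2 * sigma ^ 2 * Wpp t r + c * (Wp t r * Wp t r))); [ring| lra].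
    - intros r. rewrite !HWter. replace (Rabs h) with (Rabs (r + h - r)) by (f_equal; ring). apply HL.
    }
  assert (Lip : forall t1 q h, 0 <= t1 <= T -> Rabs (W t1 (q + h) - W t1 q) <= L * Rabs h).
  { intros t1 q h Ht1. destruct (Rle_lt_or_eq_dec 0 t1 ltac:(lra)) as [Hp|E]; [apply Lip1; lra|].
    subst t1.
    destruct (Rle_or_lt (Rabs (W 0 (q + h) - W 0 q)) (L * Rabs h)) as [|Hgt]; auto. exfalso.
    set (e := (Rabs (W 0 (q + h) - W 0 q) - L * Rabs h) / 4).
    assert (He : 0 < e) by (unfold e; lra).
    destruct (HWc 0 (q + h) (mkposreal e He)) as [d1 Hd1].
    destruct (HWc 0 q (mkposreal e He)) as [d2 Hd2].
    set (s := Rmin (Rmin d1 d2) T / 2).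
    assert (Hm1 : 0 < Rmin (Rmin d1 d2) T).
    { apply Rmin_glb_lt; [apply Rmin_glb_lt; apply cond_pos| lra]. }
    pose proof (Rmin_l (Rmin d1 d2) T). pose proof (Rmin_r (Rmin d1 d2) T).
    pose proof (Rmin_l d1 d2). pose proof (Rmin_r d1 d2).
    assert (Hs0 : 0 < s <= T) by (unfold s; lra).
    assert (Hs1 : Rabs (s - 0) < d1) by (rewrite Rminus_0_r, Rabs_right; unfold s; lra).
    assert (Hs2 : Rabs (s - 0) < d2) by (rewrite Rminus_0_r, Rabs_right; unfold s; lra).
    specialize (Hd1 s (q + h) Hs1 ltac:(rewrite Rminus_eq_0, Rabs_R0; apply cond_pos)).
    specialize (Hd2 s q Hs2 ltac:(rewrite Rminus_eq_0, Rabs_R0; apply cond_pos)).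
    simpl in Hd1, Hd2. rewrite !HWcW in Hd1, Hd2 by lra.
    pose proof (Lip1 s q h Hs0).
    assert (Rabs ((W s (q + h) - W s q) - (W 0 (q + h) - W 0 q)) < 2 * e).
    { replace ((W s (q + h) - W s q) - (W 0 (q + h) - W 0 q)) with
        ((W s (q + h) - W 0 (q + h)) - (W s q - W 0 q)) by ring.
      eapply Rle_lt_trans; [apply Rabs_sub_le|]. lra. }
    unfold e in *. split_Rabs; lra. }
  intros t p Ht. fold (Wp t p).
  apply (deriv_lip (fun r => W t r) p). apply HWp; auto.
  intros h. apply Lip. lra.
Qed.

Lemma lim_inv_S C : is_lim_seq (fun n => C * / INR (S n)) 0.
Proof.
  assert (H : is_lim_seq (fun n => / INR n) 0).
  { replace (Finite 0) with (Rbar_inv p_infty) by reflexivity.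
    apply is_lim_seq_inv. apply is_lim_seq_INR. discriminate. }
  apply is_lim_seq_incr_1 in H.
  apply (is_lim_seq_scal_l _ C) in H. simpl in H. rewrite Rmult_0_r in H. exact H.
Qed.

Theorem mainTheorem6 (T sigma lam kappa : R) (H1 : R -> R)
  (v vt vp vpp : nat -> nat -> R -> R -> R) :
  0 < T -> 0 < sigma -> 0 < lam -> 0 < kappa ->
  C2b H1 -> (exists p0, H1 p0 <> 0) ->
  (forall N : nat, (1 <= N)%nat ->
     classical_solution T sigma lam kappa N (claims H1)
       (v N) (vt N) (vp N) (vpp N)) ->
  forall t p : R, 0 <= t < T ->
    is_lim_seq (fun N : nat => agg_speed lam kappa N (vp N) t p) 0.
Proof.
  intros HT Hs Hl Hk [H' [H'' [Hd1 [Hd2 [_ [M HM]]]]]] _ Hsol t p Ht.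
  assert (HM0 : 0 <= M) by (pose proof (proj1 (HM 0)); pose proof (Rabs_pos (H1 0)); lra).
  assert (HL : forall x y, Rabs (H1 y - H1 x) <= M * Rabs (y - x)).
  { apply (mvt_lip H1 H'); auto. intros x; apply (HM x). }
  set (C := lam / kappa * M).
  assert (Hb : forall N, Rabs (agg_speed lam kappa N (vp N) t p) <= C * / INR (S N)).
  { intros N. rewrite agg_formula by auto.
    assert (Hpos : 0 < INR (N + 1)) by (apply lt_0_INR; lia).
    replace (S N) with (N + 1)%nat by lia.
    assert (Hal : 0 <= lam / kappa / INR (N + 1)).
    { apply Rlt_le. apply Rdiv_lt_0_compat; [apply Rdiv_lt_0_compat|]; lra. }
    rewrite Rabs_mult, (Rabs_right (lam / kappa / INR (N + 1))) by lra.
    assert (Hw : Rabs (psum N (fun i => vp N i t p)) <= M).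
    { destruct N as [|N'].
      - rewrite psum_0, Rabs_R0. lra.
      - apply (key T sigma lam kappa H1 M (S N') (v (S N')) (vt (S N')) (vp (S N')) (vpp (S N'))); [lra|lra|lra|lra|lia|exact HL|apply Hsol; lia|lra]. }
    unfold C. unfold Rdiv. 
    replace (lam * / kappa * M * / INR (N + 1)) with (lam * / kappa * / INR (N + 1) * M) by ring.
    apply Rmult_le_compat_l; [|exact Hw]. unfold Rdiv in Hal. exact Hal. }
  apply (is_lim_seq_le_le (fun N => - (C * / INR (S N))) _ (fun N => C * / INR (S N))).
  - intros N. specialize (Hb N). apply Rabs_def2b in Hb. exact Hb.
  - apply (is_lim_seq_ext (fun N => (- C) * / INR (S N))). intros; ring. apply lim_inv_S.
  - apply lim_inv_S.
Qed.
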